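(* Let $n\ge 6$ and let $CB_n$ be the set of chemical bicyclic graphs on $n$ vertices. Define the following subsets of $CB_n$ (in each, all $m_{i,j}$ not listed are $0$): $\beta_2$: $n_4=0,n_3=2,n_2=n-2,n_1=0$, $m_{2,3}=4$, $m_{3,3}=1$, $m_{2,2}=n-4$; $\beta_3$: $n_4=0,n_3=2,n_2=n-2,n_1=0$, $m_{2,3}=6$, $m_{2,2}=n-5$; $\beta_9$: $n_4=0,n_3=3,n_2=n-4,n_1=1$, $m_{1,2}=1$, $m_{2,3}=3$, $m_{3,3}=3$, $m_{2,2}=n-6$. Let $G_1\in\beta_2$, $G_2\in\beta_3$, $G_3\in\beta_9$, and let $G\in CB_n$ not belong to $\beta_2\cup\beta_3\cup\beta_9$. Then $SO_{red}(G_1)<SO_{red}(G_2)<SO_{red}(G_3)<SO_{red}(G)$.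
   Context: All graphs are simple and connected. A chemical graph is a graph with maximum degree at most $4$; a bicyclic graph is a connected graph with $n$ vertices and $n+1$ edges. $d_G(u)$ is the degree of $u$, $n_i$ the number of vertices of degree $i$, and $m_{i,j}$ the number of edges joining a vertex of degree $i$ to a vertex of degree $j$. The reduced Sombor index is $SO_{red}(G)=\sum_{uv\in E(G)}\sqrt{(d_G(u)-1)^2+(d_G(v)-1)^2}$. *)

(* Defs.v *)
From HB Require Import structures.
From mathcomp Require Import all_boot all_order all_algebra.
Set Implicit Arguments. Unset Strict Implicit. Unset Printing Implicit Defensive.
Import Order.TTheory GRing.Theory Num.Theory.

Definition simple_graph (n : nat) (e : rel 'I_n) : Prop :=
  symmetric e /\ irreflexive e.

Definition connected_graph (n : nat) (e : rel 'I_n) : Prop :=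
  forall x y : 'I_n, connect e x y.

Definition edges (n : nat) (e : rel 'I_n) : {set 'I_n * 'I_n} :=
  [set p | e p.1 p.2 && (p.1 < p.2)%N].

Definition deg (n : nat) (e : rel 'I_n) (x : 'I_n) : nat := #|[set y | e x y]|.

Definition nverts (n : nat) (e : rel 'I_n) (i : nat) : nat :=
  #|[set x | deg e x == i]|.

Definition medges (n : nat) (e : rel 'I_n) (i j : nat) : nat :=
  #|[set p in edges e | ((deg e p.1 == i) && (deg e p.2 == j))
                         || ((deg e p.1 == j) && (deg e p.2 == i))]|.

Definition chem_bicyclic (n : nat) (e : rel 'I_n) : Prop :=
  [/\ simple_graph e, connected_graph e, #|edges e| = n.+1
    & forall x, (deg e x <= 4)%N].

Local Open Scope ring_scope.
Definition SOred (R : rcfType) (n : nat) (e : rel 'I_n) : R :=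
  \sum_(p in edges e)
     Num.sqrt (((deg e p.1)%:R - 1) ^+ 2 + ((deg e p.2)%:R - 1) ^+ 2).
Local Close Scope ring_scope.

Definition other_m_zero (n : nat) (e : rel 'I_n) (l : seq (nat * nat)) : Prop :=
  forall i j : nat, (i <= j)%N -> (i, j) \notin l -> medges e i j = 0%N.

Definition beta2 (n : nat) (e : rel 'I_n) : Prop :=
  [/\ chem_bicyclic e,
      [/\ nverts e 4 = 0, nverts e 3 = 2, nverts e 2 = n - 2 & nverts e 1 = 0],
      [/\ medges e 2 3 = 4, medges e 3 3 = 1 & medges e 2 2 = n - 4]
    & other_m_zero e [:: (2,3); (3,3); (2,2)]].

Definition beta3 (n : nat) (e : rel 'I_n) : Prop :=
  [/\ chem_bicyclic e,
      [/\ nverts e 4 = 0, nverts e 3 = 2, nverts e 2 = n - 2 & nverts e 1 = 0],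
      medges e 2 3 = 6 /\ medges e 2 2 = n - 5
    & other_m_zero e [:: (2,3); (2,2)]].

Definition beta9 (n : nat) (e : rel 'I_n) : Prop :=
  [/\ chem_bicyclic e,
      [/\ nverts e 4 = 0, nverts e 3 = 3, nverts e 2 = n - 4 & nverts e 1 = 1],
      [/\ medges e 1 2 = 1, medges e 2 3 = 3, medges e 3 3 = 3 & medges e 2 2 = n - 6]
    & other_m_zero e [:: (1,2); (2,3); (3,3); (2,2)]].

(* Main.v *)
Require Import Defs.
From HB Require Import structures.
From mathcomp Require Import all_boot all_order all_algebra.
From mathcomp Require Import zify ring lra.
From Stdlib Require Import ClassicalEpsilon Classical_Prop.
Import Order.TTheory GRing.Theory Num.Theory.
Set Implicit Arguments. Unset Strict Implicit. Unset Printing Implicit Defensive.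

Section G.
Variables (n : nat) (e : rel 'I_n).
Hypothesis (hsym : symmetric e) (hirr : irreflexive e).
Local Notation d := (deg e).

Lemma connect_closedP (P : 'I_n -> Prop) x y :
  P x -> (forall z w, P z -> e z w -> P w) -> connect e x y -> P y.
Proof.
move=> Px cl /connectP [p pth ->].
elim: p x Px pth => [|z p IH] x Px //= /andP [exz pth].
exact: IH (cl _ _ Px exz) pth.
Qed.

Lemma card_sub_sum (T : finType) (A : {set T}) (P : pred T) :
  #|[set p in A | P p]| = \sum_(p in A) (P p : nat).
Proof.
rewrite -sum1_card (eq_bigl (fun p => (p \in A) && P p)); last by move=> p; rewrite inE.
rewrite big_mkcondr /=; apply: eq_bigr => p _; by case: (P p).
Qed.

Lemma deg_sum x : d x = \sum_(y | e x y) 1.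
Proof. by rewrite /deg -sum1_card; apply: eq_bigl => y; rewrite inE. Qed.

Lemma sum_adj (G : 'I_n -> 'I_n -> nat) :
  \sum_x \sum_(y | e x y) G x y = \sum_(p in edges e) (G p.1 p.2 + G p.2 p.1).
Proof.
rewrite pair_big_dep /= (bigID (fun p : 'I_n * 'I_n => (p.1 < p.2)%N)) /=.
rewrite big_split /=; congr (_ + _).
  by apply: eq_bigl => p; rewrite /edges inE.
rewrite (reindex_inj (h := fun p : 'I_n * 'I_n => (p.2, p.1))) /=; last first.
  by move=> [a b] [c f] /= [-> ->].
apply: eq_bigl => [[a b]] /=; rewrite /edges inE /= hsym.
case: (boolP (e a b)) => //= hab; rewrite -leqNgt leq_eqVlt.
case: eqP => //= hba; move: hab; by rewrite (val_inj hba) hirr.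
Qed.

Lemma nverts_sum i : nverts e i = \sum_x (d x == i : nat).
Proof.
rewrite /nverts -sum1_card big_mkcond /=; apply: eq_bigr => x _.
by rewrite inE; case: (_ == _).
Qed.

Lemma hand i : i * nverts e i = \sum_(p in edges e) ((d p.1 == i) + (d p.2 == i)).
Proof.
rewrite nverts_sum big_distrr /= -(sum_adj (fun x y => (d x == i : nat))).
apply: eq_bigr => x _.
have -> : \sum_(y | e x y) (d x == i : nat) = (d x == i) * d x.
  by rewrite deg_sum big_distrr /=; apply: eq_bigr => *; rewrite muln1.
by case: eqP => [->|]; rewrite ?muln0 ?mul1n ?muln1.
Qed.

Lemma degsum : \sum_x d x = 2 * #|edges e|.
Proof.
rewrite (eq_bigr (fun x => \sum_(y | e x y) 1)); last by move=> x _; rewrite deg_sum.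
rewrite (sum_adj (fun _ _ => 1)) sum_nat_const; lia.
Qed.

Lemma closed_contra (hE : #|edges e| = n.+1) (hc : connected_graph e)
  (P : 'I_n -> Prop) x : P x -> (forall z w, P z -> e z w -> P w) ->
  (forall z, P z -> (d z <= 2)%N) -> False.
Proof.
move=> Px cl h2.
have hall : forall y, P y by move=> y; apply: (connect_closedP Px cl (hc x y)).
have : (\sum_x d x <= \sum_(x : 'I_n) 2)%N by apply: leq_sum => y _; apply: h2.
by rewrite degsum hE sum_nat_const card_ord; lia.
Qed.

Lemma deg_ge1 (hn : (2 <= n)%N) (hc : connected_graph e) x : (1 <= d x)%N.
Proof.
rewrite lt0n; apply/negP => /eqP h0.
have nox : forall y, ~~ e x y.
  move=> y; apply/negP => hxy.
  have := cards0_eq h0 => /setP /(_ y); by rewrite !inE hxy.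
have hn0 : (0 < n)%N by apply: leq_trans hn.
pose a := Ordinal hn0; pose b := Ordinal hn.
have [y hy] : exists y, y != x.
  case: (x =P a) => [->|hxa]; [exists b | exists a]; first by apply/eqP => /(congr1 val).
  by apply/eqP => hh; apply: hxa.
have : (fun z => z = x) y.
  apply: (connect_closedP (P := fun z => z = x) (erefl x)) (hc x y).
  by move=> z w -> hw; move: (nox w); rewrite hw.
by move=> /= hyx; rewrite hyx eqxx in hy.
Qed.

Lemma nb1 c p w : d c = 1%N -> e c p -> e c w -> w = p.
Proof.
move=> /eqP /cards1P [a ha] hp hw.
have : p \in [set y | e c y] by rewrite inE.
have : w \in [set y | e c y] by rewrite inE.
by rewrite ha !inE => /eqP -> /eqP ->.
Qed.

Definition other (p c : 'I_n) : 'I_n := odflt c [pick y | e c y && (y != p)].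

Lemma nb2 c p : d c = 2%N -> e c p ->
  [/\ e c (other p c), other p c != p & forall w, e c w -> w = p \/ w = other p c].
Proof.
move=> hd hp; rewrite /other; case: pickP => [y /andP [h1 h2] | none] /=.
  split=> // w hw.
  have sub : [set p; y] \subset [set z | e c z].
    by apply/subsetP => z; rewrite !inE => /orP [] /eqP ->.
  have : [set p; y] == [set z | e c z].
    rewrite eqEcard sub /= cards2 eq_sym h2 -/(deg e c) hd //.
  move=> /eqP /setP /(_ w); rewrite !inE hw => /orP [] /eqP ->; by [left|right].
exfalso.
have sub : [set z | e c z] \subset [set p].
  apply/subsetP => z; rewrite !inE => hz; move: (none z); rewrite hz /=.
  by move/negbFE.
move: (subset_leq_card sub); rewrite cards1 -/(deg e c) hd.
by [].
Qed.

Definition step (s : 'I_n * 'I_n) := (s.2, other s.1 s.2).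
Definition walk s0 k := iter k step s0.
Definition good s0 K := all (fun j => d (walk s0 j).2 == 2) (iota 0 K).
Definition start (s0 : 'I_n * 'I_n) := [/\ d s0.1 = 1%N, e s0.1 s0.2 & d s0.2 = 2%N].

Lemma walkS s0 k : walk s0 k.+1 = step (walk s0 k). Proof. by []. Qed.
Lemma walk0 s0 : walk s0 0 = s0. Proof. by []. Qed.

Lemma goodS s0 k : good s0 k.+1 = good s0 k && (d (walk s0 k).2 == 2).
Proof. by rewrite /good -[k.+1]addn1 iotaD all_cat /= andbT. Qed.

Lemma good_lt s0 K j : good s0 K -> (j < K)%N -> d (walk s0 j).2 = 2%N.
Proof. by move=> /allP h hj; apply/eqP/h; rewrite mem_iota. Qed.

Lemma good_le s0 K k : good s0 K -> (k <= K)%N -> good s0 k.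
Proof.
move=> /allP h hk; apply/allP => j; rewrite mem_iota => /andP [_ hj]; apply: h.
by rewrite mem_iota /=; apply: leq_trans hj hk.
Qed.

Lemma inv s0 k : start s0 -> good s0 k -> e (walk s0 k).1 (walk s0 k).2.
Proof.
move=> [h1 h2 h3]; elim: k => [|k IH] //.
rewrite goodS => /andP [hg /eqP hd].
have hk := IH hg.
have hk' : e (walk s0 k).2 (walk s0 k).1 by rewrite hsym.
have [ho _ _] := nb2 hd hk'.
by rewrite walkS.
Qed.

Lemma exit (hE : #|edges e| = n.+1) (hc : connected_graph e) s0 :
  start s0 -> exists K, good s0 K /\ (3 <= d (walk s0 K).2)%N.
Proof.
move=> hs; case: (hs) => [h1 h2 h3].
apply: NNPP => hno.
have H : forall K, good s0 K -> (d (walk s0 K).2 <= 2)%N.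
  move=> K hg; rewrite leqNgt; apply/negP => h; apply: hno; by exists K.
pose P z := z = s0.1 \/ exists k, good s0 k /\ (walk s0 k).2 = z.
apply: (closed_contra hE hc (P := P) (x := s0.1)); first by left.
- move=> z w [-> | [k [hg <-]]] hzw.
    by right; exists 0%N; split => //; rewrite (nb1 h1 h2 hzw).
  have hinv := inv hs hg.
  have hprev : P (walk s0 k).1.
    move: hg hinv; case: (k) => [|k'] hg' _; first by left.
    right; exists k'; split => //; apply: good_le hg' _; exact: leqnSn.
  have hd := H k hg.
  have hzp : e (walk s0 k).2 (walk s0 k).1 by rewrite hsym.
  case hdz: (d (walk s0 k).2) => [|[|[|m]]].
  + move: hdz; rewrite /deg => /cards0_eq /setP /(_ w); by rewrite !inE hzw.
  + by rewrite (nb1 hdz hzp hzw).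
  + have [_ _ hall] := nb2 hdz hzp.
    case: (hall w hzw) => ->; first exact: hprev.
    right; exists k.+1; split; last by [].
    by rewrite goodS hg hdz.
  + by rewrite hdz in hd.
- by move=> z [-> | [k [hg <-]]]; [rewrite h1 | exact: H].
Qed.

Lemma step_inj s s' : d s.2 = 2%N -> e s.1 s.2 -> e s'.1 s'.2 -> step s = step s' -> s = s'.
Proof.
case: s s' => [p c] [p' c'] /= hd h h' [hc ho]; subst c'.
have hcp : e c p by rewrite hsym.
have hcp' : e c p' by rewrite hsym.
have [_ hne hall] := nb2 hd hcp.
case: (hall p' hcp') => [-> //|hp'].
have [_ hne' _] := nb2 hd hcp'.
by rewrite -ho -hp' eqxx in hne'.
Qed.

Lemma back s0 s0' K K' : start s0 -> start s0' -> good s0 K -> good s0' K' ->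
  walk s0 K = walk s0' K' ->
  forall i, (i <= K)%N -> (i <= K')%N -> walk s0 (K - i) = walk s0' (K' - i).
Proof.
move=> hs hs' hg hg' heq; elim=> [|i IH] hi hi'; first by rewrite !subn0.
have e1 : K - i = (K - i.+1).+1 by lia.
have e2 : K' - i = (K' - i.+1).+1 by lia.
move: (IH (ltnW hi) (ltnW hi')); rewrite e1 e2 !walkS => hst.
apply: step_inj hst.
- apply: good_lt hg _; lia.
- exact: inv hs (good_le hg (leq_subr _ _)).
- exact: inv hs' (good_le hg' (leq_subr _ _)).
Qed.

Lemma inj_aux s0 s0' K K' : start s0 -> start s0' -> good s0 K -> good s0' K' ->
  (K <= K')%N -> walk s0 K = walk s0' K' -> s0 = s0'.
Proof.
move=> hs hs' hg hg' hK heq.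
have := back hs hs' hg hg' heq (leqnn K) hK; rewrite subnn walk0.
case E: (K' - K) => [|j]; first by rewrite walk0.
move=> h0; exfalso; case: hs => h1 _ _.
have hj : (j < K')%N by lia.
have := good_lt hg' hj; rewrite -[(walk s0' j).2]/((walk s0' j.+1).1) -h0 h1.
by [].
Qed.

Definition ind (i j a b : nat) : bool := ((a == i) && (b == j)) || ((a == j) && (b == i)).

Lemma medgesE i j : medges e i j = #|[set p in edges e | ind i j (d p.1) (d p.2)]|.
Proof. by []. Qed.

Definition startp (p : 'I_n * 'I_n) := if d p.1 == 1%N then p else (p.2, p.1).
Definition sortp (q : 'I_n * 'I_n) := if (q.1 < q.2)%N then q else (q.2, q.1).

Lemma sortp_startp (p : 'I_n * 'I_n) : (p.1 < p.2)%N -> sortp (startp p) = p.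
Proof.
case: p => a b /= hab; rewrite /startp /sortp /=.
case: (d a == 1%N); rewrite /= ?hab //.
by rewrite ltnNge (ltnW hab).
Qed.

Lemma sortp_inj (q q' : 'I_n * 'I_n) : d q.1 = 2%N -> d q'.1 = 2%N -> (3 <= d q.2)%N -> (3 <= d q'.2)%N ->
  sortp q = sortp q' -> q = q'.
Proof.
case: q q' => [a b] [a' b'] /= h1 h1' h2 h2'; rewrite /sortp /=.
case: (a < b)%N; case: (a' < b')%N => //.
- by move=> [ha hb]; rewrite ha in h1; rewrite h1 in h2'.
- by move=> [ha hb]; rewrite -ha in h1'; rewrite h1' in h2.
- by move=> [-> ->].
Qed.

Lemma card_rel (T U : finType) (A : {set T}) (B : {set U}) (R : T -> U -> Prop) :
  (forall x, x \in A -> exists y, y \in B /\ R x y) ->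
  (forall x x' y, x \in A -> x' \in A -> R x y -> R x' y -> x = x') -> (#|A| <= #|B|)%N.
Proof.
move=> H Hi.
case: (set_0Vmem A) => [->|[x0 hx0]]; first by rewrite cards0.
have [y0 _] := H x0 hx0.
pose f x := epsilon (inhabits y0) (fun y => y \in B /\ R x y).
have hf : forall x, x \in A -> f x \in B /\ R x (f x).
  by move=> x hx; exact: (epsilon_spec (inhabits y0) (fun y => y \in B /\ R x y) (H x hx)).
rewrite -(@card_in_imset _ _ f (mem A)); last first.
  move=> x x' hx hx' hfx; apply: (Hi x x' (f x)) => //.
  - by case: (hf x hx).
  - by rewrite hfx; case: (hf x' hx').
apply: subset_leq_card; apply/subsetP => _ /imsetP [x hx ->].
by case: (hf x hx).
Qed.

Lemma pendant (hE : #|edges e| = n.+1) (hc : connected_graph e) (h4 : forall x, (d x <= 4)%N) :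
  (medges e 1 2 <= medges e 2 3 + medges e 2 4)%N.
Proof.
rewrite !medgesE.
set A := [set p in edges e | _].
set B3 := [set p in edges e | ind 2 3 _ _].
set B4 := [set p in edges e | ind 2 4 _ _].
apply: (@leq_trans #|B3 :|: B4|); last by rewrite cardsU leq_subr.
pose R (p u : 'I_n * 'I_n) := exists K, [/\ good (startp p) K, (3 <= d (walk (startp p) K).2)%N
   & u = sortp (walk (startp p) K)].
have hA : forall p, p \in A -> start (startp p) /\ (p.1 < p.2)%N.
  move=> [a b]; rewrite !inE /= /ind /startp /= => /andP [/andP [hab hlt]].
  move=> /orP [] /andP [/eqP ha /eqP hb]; rewrite ha /=; split => //.
  by split => //; rewrite hsym.
have hq1 : forall s0 K, start s0 -> good s0 K -> (3 <= d (walk s0 K).2)%N -> d (walk s0 K).1 = 2%N.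
  move=> s0 [|k] hs0 hgk hk.
    by case: hs0 => _ _ h; rewrite walk0 h in hk.
  by rewrite walkS /= (good_lt hgk (ltnSn k)).
apply: (card_rel (R := R)).
- move=> p hp; have [hs _] := hA p hp.
  have [K [hg hK]] := exit hE hc hs.
  exists (sortp (walk (startp p) K)); split; last by exists K.
  set q := walk (startp p) K.
  have hq := inv hs hg.
  have hq1' : d q.1 = 2%N by apply: hq1.
  have hne : q.1 != q.2 by apply/eqP => hh; move: hq; rewrite hh hirr.
  have hq2 := h4 q.2.
  have hin : sortp q \in edges e.
    rewrite /sortp /edges; case: ifP => hlt; rewrite inE /= ?hq ?hlt //.
    rewrite hsym hq /=; rewrite ltn_neqAle eq_sym hne /= leqNgt hlt //.
  have hind : ind 2 3 (d (sortp q).1) (d (sortp q).2) || ind 2 4 (d (sortp q).1) (d (sortp q).2).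
    rewrite /sortp; case: ifP => _ /=; rewrite /ind hq1' /=;
    case: (d q.2) hK hq2 => [|[|[|[|[|k]]]]] //.
  rewrite inE; move/orP: hind => [] hh; apply/orP; [left|right]; by rewrite inE hin hh.
- move=> p p' u hp hp' [K [hg hK ->]] [K' [hg' hK' hu]].
  have [hs hlt] := hA p hp.
  have [hs' hlt'] := hA p' hp'.
  have hw := sortp_inj (hq1 _ _ hs hg hK) (hq1 _ _ hs' hg' hK') hK hK' hu.
  have hst : startp p = startp p'.
    case: (leqP K K') => hKK.
      exact: inj_aux hs hs' hg hg' hKK hw.
    by symmetry; apply: inj_aux hs' hs hg' hg (ltnW hKK) (esym hw).
  by rewrite -(sortp_startp hlt) -(sortp_startp hlt') hst.
Qed.

Lemma m11_0 (hE : #|edges e| = n.+1) (hc : connected_graph e) : medges e 1 1 = 0%N.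
Proof.
rewrite medgesE; apply/eqP; rewrite cards_eq0; apply/eqP/setP => [[a b]].
rewrite !inE /ind /= orbb; apply/negP => /andP [/andP [hab _] /andP [/eqP ha /eqP hb]].
have hba : e b a by rewrite hsym.
apply: (closed_contra hE hc (P := fun z => z = a \/ z = b) (x := a)); first by left.
- move=> z w [->|->] hw; [right; exact: nb1 ha hab hw | left; exact: nb1 hb hba hw].
- by move=> z [->|->]; rewrite ?ha ?hb.
Qed.

Lemma sum_card_cond (P Q : pred 'I_n) :
  \sum_(y | P y) (Q y : nat) = #|[set y | P y && Q y]|.
Proof.
rewrite -sum1_card [RHS]big_mkcond [LHS]big_mkcond /=; apply: eq_bigr => y _.
by rewrite inE; case: (P y); case: (Q y).
Qed.

Lemma msum i j : medges e i j = \sum_(p in edges e) (ind i j (d p.1) (d p.2) : nat).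
Proof. by rewrite medgesE card_sub_sum. Qed.

Lemma mii_bound i : (2 * medges e i i <= nverts e i * (nverts e i).-1)%N.
Proof.
have -> : 2 * medges e i i =
    \sum_x \sum_(y | e x y) (((d x == i) && (d y == i)) : nat).
  rewrite (sum_adj (fun x y => (((d x == i) && (d y == i)) : nat))) msum big_distrr /=.
  by apply: eq_bigr => p _; rewrite /ind orbb andbC; case: (_ && _).
rewrite nverts_sum big_distrl /=; apply: leq_sum => x _.
case: (boolP (d x == i)) => hx /=; last by rewrite big1.
rewrite mul1n sum_card_cond.
have sub : [set y | e x y && (d y == i)] \subset [set y | d y == i] :\ x.
  apply/subsetP => y; rewrite !inE => /andP [hxy ->]; rewrite andbT.
  by apply/eqP => hh; move: hxy; rewrite hh hirr.
apply: (leq_trans (subset_leq_card sub)).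
rewrite -nverts_sum /nverts (cardsD1 x [set y | d y == i]) inE hx.
by rewrite add1n /=.
Qed.

Lemma pointwise a b : (1 <= a <= 4)%N -> (1 <= b <= 4)%N ->
  [/\ 1%N = ind 1 1 a b + ind 1 2 a b + ind 1 3 a b + ind 1 4 a b + ind 2 2 a b
            + ind 2 3 a b + ind 2 4 a b + ind 3 3 a b + ind 3 4 a b + ind 4 4 a b,
      (a == 1%N) + (b == 1%N) = 2 * ind 1 1 a b + ind 1 2 a b + ind 1 3 a b + ind 1 4 a b,
      (a == 2) + (b == 2) = ind 1 2 a b + 2 * ind 2 2 a b + ind 2 3 a b + ind 2 4 a b,
      (a == 3) + (b == 3) = ind 1 3 a b + ind 2 3 a b + 2 * ind 3 3 a b + ind 3 4 a b
    & (a == 4) + (b == 4) = ind 1 4 a b + ind 2 4 a b + ind 3 4 a b + 2 * ind 4 4 a b]%N.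
Proof.
by case: a => [|[|[|[|[|a]]]]] //; case: b => [|[|[|[|[|b]]]]].
Qed.

Section Chem.
Hypotheses (hE : #|edges e| = n.+1) (hc : connected_graph e) (h4 : forall x, (d x <= 4)%N)
  (hn2 : (2 <= n)%N).

Lemma deg_range x : (1 <= d x <= 4)%N.
Proof. by rewrite deg_ge1 // h4. Qed.

Lemma eq_edges :
  (medges e 1 1 + medges e 1 2 + medges e 1 3 + medges e 1 4 + medges e 2 2
   + medges e 2 3 + medges e 2 4 + medges e 3 3 + medges e 3 4 + medges e 4 4 = n.+1)%N.
Proof.
rewrite !msum -!big_split /= -hE -sum1_card; apply: eq_bigr => p _.
by have [P1 _ _ _ _] := pointwise (deg_range p.1) (deg_range p.2).
Qed.

Lemma eq_h1 : (nverts e 1 = 2 * medges e 1 1 + medges e 1 2 + medges e 1 3 + medges e 1 4)%N.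
Proof.
rewrite -[nverts e 1]mul1n hand !msum big_distrr -!big_split /=; apply: eq_bigr => p _.
by have [_ P _ _ _] := pointwise (deg_range p.1) (deg_range p.2).
Qed.

Lemma eq_h2 : (2 * nverts e 2 = medges e 1 2 + 2 * medges e 2 2 + medges e 2 3 + medges e 2 4)%N.
Proof.
rewrite hand !msum big_distrr -!big_split /=; apply: eq_bigr => p _.
by have [_ _ P _ _] := pointwise (deg_range p.1) (deg_range p.2).
Qed.

Lemma eq_h3 : (3 * nverts e 3 = medges e 1 3 + medges e 2 3 + 2 * medges e 3 3 + medges e 3 4)%N.
Proof.
rewrite hand !msum big_distrr -!big_split /=; apply: eq_bigr => p _.
by have [_ _ _ P _] := pointwise (deg_range p.1) (deg_range p.2).
Qed.

Lemma eq_h4 : (4 * nverts e 4 = medges e 1 4 + medges e 2 4 + medges e 3 4 + 2 * medges e 4 4)%N.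
Proof.
rewrite hand !msum big_distrr -!big_split /=; apply: eq_bigr => p _.
by have [_ _ _ _ P] := pointwise (deg_range p.1) (deg_range p.2).
Qed.

Lemma eq_v : (nverts e 1 + nverts e 2 + nverts e 3 + nverts e 4 = n)%N.
Proof.
rewrite !nverts_sum -!big_split /= -[RHS]card_ord -sum1_card; apply: eq_bigr => x _.
by have := deg_range x; case: (d x) => [|[|[|[|[|k]]]]].
Qed.

Lemma medges_out i j : ~~ [&& (1 <= i <= 4)%N & (1 <= j <= 4)%N] -> medges e i j = 0%N.
Proof.
move=> hij; rewrite msum big1 // => p _.
have := deg_range p.1; have := deg_range p.2.
move: (d p.1) (d p.2) hij => a b hij ha hb.
rewrite /ind; case: (boolP (_ || _)) => //= /orP [] /andP [/eqP ha' /eqP hb'];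
  subst; by rewrite ha hb in hij.
Qed.


Local Open Scope ring_scope.
Definition F (R : rcfType) (a b : nat) : R := Num.sqrt ((a%:R - 1) ^+ 2 + (b%:R - 1) ^+ 2).
Arguments F : simpl never.

Lemma FC (R : rcfType) a b : F R a b = F R b a.
Proof. by rewrite /F addrC. Qed.

Lemma Fpoint (R : rcfType) a b : (1 <= a <= 4)%N -> (1 <= b <= 4)%N ->
  F R a b = (ind 1 1 a b)%:R * F R 1 1 + (ind 1 2 a b)%:R * F R 1 2 + (ind 1 3 a b)%:R * F R 1 3
   + (ind 1 4 a b)%:R * F R 1 4 + (ind 2 2 a b)%:R * F R 2 2 + (ind 2 3 a b)%:R * F R 2 3
   + (ind 2 4 a b)%:R * F R 2 4 + (ind 3 3 a b)%:R * F R 3 3 + (ind 3 4 a b)%:R * F R 3 4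
   + (ind 4 4 a b)%:R * F R 4 4.
Proof.
case: a => [|[|[|[|[|a]]]]] //; case: b => [|[|[|[|[|b]]]]] // _ _;
  rewrite /ind /= ?mul0r ?mul1r ?add0r ?addr0; first [done | by rewrite FC].
Qed.

Lemma SO_decomp (R : rcfType) : SOred R e =
   (medges e 1 1)%:R * F R 1 1 + (medges e 1 2)%:R * F R 1 2 + (medges e 1 3)%:R * F R 1 3
   + (medges e 1 4)%:R * F R 1 4 + (medges e 2 2)%:R * F R 2 2 + (medges e 2 3)%:R * F R 2 3
   + (medges e 2 4)%:R * F R 2 4 + (medges e 3 3)%:R * F R 3 3 + (medges e 3 4)%:R * F R 3 4
   + (medges e 4 4)%:R * F R 4 4.
Proof.
rewrite !msum !natr_sum !mulr_suml -!big_split /=.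
by apply: eq_bigr => p _; rewrite -Fpoint //; apply: deg_range.
Qed.
Local Close Scope ring_scope.
End Chem.
End G.

Local Close Scope ring_scope.

Local Open Scope ring_scope.
Lemma sq_lt (R: rcfType) (p q s y : R): 0 <= s -> s^+2 = y -> 0 < q -> p * p < y * (q * q) -> p < q * s.
Proof.
move=> hs hy hq hp; rewrite ltNge; apply/negP => H.
have h0 : 0 <= q * s by rewrite mulr_ge0 // ltW.
have : (q * s) * (q * s) <= p * p by apply: ler_pM.
move: hp; rewrite -hy; nra.
Qed.
Lemma sq_gt (R: rcfType) (p q s y : R): 0 <= s -> s^+2 = y -> 0 < q -> 0 <= p -> y * (q * q) < p * p -> q * s < p.
Proof.
move=> hs hy hq hp0 hp; rewrite ltNge; apply/negP => H.
have : p * p <= (q * s) * (q * s) by apply: ler_pM.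
move: hp; rewrite -hy; nra.
Qed.

Lemma Fsq (R : rcfType) a b : 0 <= F R a b /\ F R a b ^+ 2 = (a%:R - 1) ^+ 2 + (b%:R - 1) ^+ 2.
Proof.
rewrite /F; split; first exact: sqrtr_ge0.
by rewrite sqr_sqrtr // addr_ge0 // sqr_ge0.
Qed.

Lemma Fbounds (R : rcfType) :
  [/\ 999 * 1000 + 999 < (1000 * 1000) * F R 1 2, (1000 * 1000) * F R 1 2 < 1000 * 1000 + 1,
      1999 * 1000 + 999 < (1000 * 1000) * F R 1 3,
      2999 * 1000 + 999 < (1000 * 1000) * F R 1 4 &
      [/\ 1414 * 1000 + 213 < (1000 * 1000) * F R 2 2, (1000 * 1000) * F R 2 2 < 1414 * 1000 + 214,
      2236 * 1000 + 67 < (1000 * 1000) * F R 2 3, (1000 * 1000) * F R 2 3 < 2236 * 1000 + 68 &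
      [/\ 3162 * 1000 + 277 < (1000 * 1000) * F R 2 4,
      2828 * 1000 + 427 < (1000 * 1000) * F R 3 3, (1000 * 1000) * F R 3 3 < 2828 * 1000 + 428,
      3605 * 1000 + 551 < (1000 * 1000) * F R 3 4 &
      4242 * 1000 + 640 < (1000 * 1000) * F R 4 4]]].
Proof.
have L a b (p : R) : p * p < ((a%:R - 1) ^+ 2 + (b%:R - 1) ^+ 2) * ((1000 * 1000) * (1000 * 1000)) ->
    p < (1000 * 1000) * F R a b.
  by have [h1 h2] := Fsq R a b; apply: sq_lt h1 h2 _; lra.
have U a b (p : R) : 0 <= p -> ((a%:R - 1) ^+ 2 + (b%:R - 1) ^+ 2) * ((1000 * 1000) * (1000 * 1000)) < p * p ->
    (1000 * 1000) * F R a b < p.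
  by have [h1 h2] := Fsq R a b; apply: sq_gt h1 h2 _; lra.
split; [apply: L| apply: U| apply: L| apply: L| split; [apply: L| apply: U| apply: L| apply: U|
  split; [apply: L| apply: L| apply: U| apply: L| apply: L]]]; rewrite /= ?expr2; try lra.
Qed.

Local Close Scope ring_scope.
Lemma arith (n n1 n2 n3 n4 m11 m12 m13 m14 m22 m23 m24 m33 m34 m44 : nat) :
 6 <= n ->
 n1+n2+n3+n4 = n ->
 m11+m12+m13+m14+m22+m23+m24+m33+m34+m44 = n.+1 ->
 n1 = 2 * m11 + m12+m13+m14 ->
 2 * n2 = m12 + 2 * m22 + m23 + m24 ->
 3 * n3 = m13+m23+2 * m33+m34 ->
 4 * n4 = m14+m24+m34+2 * m44 ->
 m11 = 0 -> m12 <= m23+m24 ->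
 (n3 = 2 -> m33 <= 1) -> (n3 = 3 -> m33 <= 3) -> (n4 = 1 -> m44 = 0) ->
 (n4= 0 /\ n3= 2 /\ n2 = n-2 /\ n1= 0 /\ m23= 4 /\ m33= 1 /\ m22 = n-4 /\ m12= 0/\ m13= 0/\ m14= 0/\ m24= 0/\ m34= 0/\ m44= 0)
 \/ (n4= 0 /\ n3= 2 /\ n2 = n-2 /\ n1= 0 /\ m23= 6 /\ m22 = n-5 /\ m12= 0/\ m13= 0/\ m14= 0/\ m24= 0/\ m34= 0/\ m33= 0/\ m44= 0)
 \/ (n4= 0 /\ n3= 3 /\ n2 = n-4 /\ n1= 1 /\ m12= 1/\ m23= 3 /\ m33= 3/\ m22 = n-6 /\ m13= 0/\ m14= 0/\ m24= 0/\ m34= 0/\ m44= 0)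
 \/ 2 * 3147 + 415 * m12 < 585 * m13 + 1585 * m14 + 821 * m23 + 1748 * m24 + 1414 * m33 + 2191 * m34 + 2828 * m44.
Proof.
move=> hn hV hE h1 h2 h3 h4 h11 hp c32 c33 c41.
have [e4|e4] : n4 = 0 \/ 1 <= n4 by lia.
- have [e3|[e3|e3]] : n3 = 2 \/ n3 = 3 \/ 4 <= n3 by lia.
  + have [e33|e33] : m33 = 0 \/ m33 = 1 by lia.
    * right; left; lia.
    * left; lia.
  + have [e12|e12] : m12 = 1 \/ m13 = 1 by lia.
    * have [e33|e33] : m33 = 3 \/ m33 <= 2 by lia.
      -- right; right; left; lia.
      -- right; right; right.
         have ? : m34 = 0 by lia.
         have ? : m23 = 9 - 2 * m33 by lia.
         lia.
    * right; right; right; lia.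
  + right; right; right; lia.
- right; right; right.
  have [h4'|h4'] : n4 = 1 \/ 2 <= n4 by lia.
  + have [f3|f3] : n3 = 0 \/ 1 <= n3 by lia.
    * lia.
    * lia.
  + lia.
Qed.

Local Close Scope ring_scope.

Local Open Scope ring_scope.

Definition Ssum (R : rcfType) (m11 m12 m13 m14 m22 m23 m24 m33 m34 m44 : nat) : R :=
   m11%:R * F R 1 1 + m12%:R * F R 1 2 + m13%:R * F R 1 3
   + m14%:R * F R 1 4 + m22%:R * F R 2 2 + m23%:R * F R 2 3
   + m24%:R * F R 2 4 + m33%:R * F R 3 3 + m34%:R * F R 3 4
   + m44%:R * F R 4 4.

Lemma gbounds (R : rcfType) :
  [/\ - (415%:R / 1000%:R) <= F R 1 2 - F R 2 2, 585%:R / 1000%:R <= F R 1 3 - F R 2 2,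
      1585%:R / 1000%:R <= F R 1 4 - F R 2 2, 821%:R / 1000%:R <= F R 2 3 - F R 2 2 &
   [/\ 1748%:R / 1000%:R <= F R 2 4 - F R 2 2, 1414%:R / 1000%:R <= F R 3 3 - F R 2 2,
      2191%:R / 1000%:R <= F R 3 4 - F R 2 2, 2828%:R / 1000%:R <= F R 4 4 - F R 2 2 &
      F R 1 2 + 3%:R * F R 2 3 + 3%:R * F R 3 3 - 7%:R * F R 2 2 < 6294%:R / 1000%:R]].
Proof.
have [B12l B12u B13 B14 [B22l B22u B23l B23u [B24 B33l B33u B34 B44]]] := Fbounds R.
split; [|clear B12l B12u B14 B23l B23u B24 B33l B33u B34 B44; lra
        |clear B12l B12u B13 B23l B23u B24 B33l B33u B34 B44; lra
        |clear B12l B12u B13 B14 B24 B33l B33u B34 B44; lra|split].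
- clear B12u B13 B14 B23l B23u B24 B33l B33u B34 B44. lra.
- clear B12l B12u B13 B14 B23l B23u B33l B33u B34 B44. lra.
- clear B12l B12u B13 B14 B23l B23u B24 B34 B44. lra.
- clear B12l B12u B13 B14 B23l B23u B24 B33l B33u B44. lra.
- clear B12l B12u B13 B14 B23l B23u B24 B33l B33u B34. lra.
- clear B12l B13 B14 B23l B24 B33l B34 B44. lra.
Qed.

Lemma chain (R : rcfType) (n : nat) (hn : (6 <= n)%N) :
  Ssum R 0 0 0 0 (n - 4) 4 0 1 0 0 < Ssum R 0 0 0 0 (n - 5) 6 0 0 0 0 /\
  Ssum R 0 0 0 0 (n - 5) 6 0 0 0 0 < Ssum R 0 1 0 0 (n - 6) 3 0 3 0 0.
Proof.
rewrite /Ssum !mul0r !add0r !addr0 !mul1r.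
rewrite (_ : (n - 4 = (n - 6) + 2)%N); last by lia.
rewrite (_ : (n - 5 = (n - 6) + 1)%N); last by lia.
rewrite !natrD; set N := (n - 6)%:R.
have [B12l B12u B13 B14 [B22l B22u B23l B23u [B24 B33l B33u B34 B44]]] := Fbounds R.
split.
- clear B12l B12u B13 B14 B23u B24 B33l B34 B44 B22l. lra.
- clear B12u B13 B14 B23l B24 B33u B34 B44 B22l. lra.
Qed.

Lemma cast_lin (R : rcfType) (k0 k12 k13 k14 k23 k24 k33 k34 k44 m12 m13 m14 m23 m24 m33 m34 m44 : nat) :
  (k0 + k12 * m12 < k13 * m13 + k14 * m14 + k23 * m23 + k24 * m24 + k33 * m33 + k34 * m34 + k44 * m44)%N ->
  k0%:R + k12%:R * m12%:R < k13%:R * m13%:R + k14%:R * m14%:R + k23%:R * m23%:R + k24%:R * m24%:R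
    + k33%:R * m33%:R + k34%:R * m34%:R + k44%:R * m44%:R :> R.
Proof. by rewrite -(ltr_nat R) !natrD !natrM. Qed.

Lemma final (R : rcfType) (n : nat) (hn : (6 <= n)%N)
   (m11 m12 m13 m14 m22 m23 m24 m33 m34 m44 : nat) :
  m11 = 0%N ->
  (m11 + m12 + m13 + m14 + m22 + m23 + m24 + m33 + m34 + m44 = n.+1)%N ->
  (2 * 3147 + 415 * m12 < 585 * m13 + 1585 * m14 + 821 * m23 + 1748 * m24 + 1414 * m33
     + 2191 * m34 + 2828 * m44)%N ->
  Ssum R 0 1 0 0 (n - 6) 3 0 3 0 0 < Ssum R m11 m12 m13 m14 m22 m23 m24 m33 m34 m44.
Proof.
move=> h11 hs hineq; subst m11.
have [g12 g13 g14 g23 [g24 g33 g34 g44 gT]] := gbounds R.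
have tm (m : nat) (c : R) i j : c <= F R i j - F R 2 2 -> m%:R * c <= m%:R * F R i j - m%:R * F R 2 2.
  by move=> h; rewrite -mulrBr; apply: ler_wpM2l => //; apply: ler0n.
have t12 := tm m12 _ _ _ g12; have t13 := tm m13 _ _ _ g13; have t14 := tm m14 _ _ _ g14.
have t23 := tm m23 _ _ _ g23; have t24 := tm m24 _ _ _ g24; have t33 := tm m33 _ _ _ g33.
have t34 := tm m34 _ _ _ g34; have t44 := tm m44 _ _ _ g44.
clear tm g12 g13 g14 g23 g24 g33 g34 g44.
have hsum : (m12%:R + m13%:R + m14%:R + m22%:R + m23%:R + m24%:R + m33%:R + m34%:R + m44%:R) * F R 2 2
   = ((n - 6)%:R + 7%:R) * F R 2 2 :> R.
  have hs' : (m12 + m13 + m14 + m22 + m23 + m24 + m33 + m34 + m44 = (n - 6) + 7)%N by clear -hs hn; lia.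
  have hs2 : ((m12 + m13 + m14 + m22 + m23 + m24 + m33 + m34 + m44)%:R : R) = ((n - 6) + 7)%:R by rewrite hs'.
  by rewrite !natrD in hs2; rewrite hs2.
have := cast_lin R hineq; rewrite (natrM _ 2 3147); clear hineq => hineq.
rewrite /Ssum !mul0r !add0r !mul1r.
set N := (n - 6)%:R in hsum *.
lra.
Qed.

Local Close Scope ring_scope.

Lemma omz n (e : rel 'I_n) (hc : connected_graph e) (h4 : forall x, (deg e x <= 4)%N) (hn2 : (2 <= n)%N)
  (l : seq (nat * nat)) :
  (forall i j, (1 <= i <= 4)%N -> (1 <= j <= 4)%N -> (i <= j)%N -> (i, j) \notin l -> medges e i j = 0%N) ->
  other_m_zero e l.
Proof.
move=> H i j hij hl.
case: (boolP [&& (1 <= i <= 4)%N & (1 <= j <= 4)%N]) => hr.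
  by case/andP: hr => hi hj; apply: H.
exact: medges_out.
Qed.

Lemma mb_aux (m k : nat) : (2 * m <= k * k.-1)%N ->
  [/\ k = 2%N -> (m <= 1)%N, k = 3%N -> (m <= 3)%N & k = 1%N -> m = 0%N].
Proof. by move=> h; split=> hk; subst k; move: h; rewrite /=; lia. Qed.

Theorem theorem3p10 (R : rcfType) (n : nat) (hn : (6 <= n)%N)
  (e1 e2 e3 e : rel 'I_n)
  (h1 : beta2 e1) (h2 : beta3 e2) (h3 : beta9 e3)
  (hG : chem_bicyclic e) (hnot : ~ (beta2 e \/ beta3 e \/ beta9 e)) :
  ((SOred R e1 < SOred R e2) && (SOred R e2 < SOred R e3)
   && (SOred R e3 < SOred R e))%R.
Proof.
have hn2 : (2 <= n)%N by apply: leq_trans hn.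
case: h1 => [[[hs1 hi1] hc1 hE1 h41] _ [a23 a33 a22] z1].
have S1 : SOred R e1 = Ssum R (medges e1 1 1) (medges e1 1 2) (medges e1 1 3) (medges e1 1 4)
  (medges e1 2 2) (medges e1 2 3) (medges e1 2 4) (medges e1 3 3) (medges e1 3 4) (medges e1 4 4)
  := SO_decomp hc1 h41 hn2 R.
rewrite a23 a33 a22 !z1 // in S1.
case: h2 => [[[hs2 hi2] hc2 hE2 h42] _ [b23 b22] z2].
have S2 : SOred R e2 = Ssum R (medges e2 1 1) (medges e2 1 2) (medges e2 1 3) (medges e2 1 4)
  (medges e2 2 2) (medges e2 2 3) (medges e2 2 4) (medges e2 3 3) (medges e2 3 4) (medges e2 4 4)
  := SO_decomp hc2 h42 hn2 R.
rewrite b23 b22 !z2 // in S2.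
case: h3 => [[[hs3 hi3] hc3 hE3 h43] _ [c12 c23 c33 c22] z3].
have S3 : SOred R e3 = Ssum R (medges e3 1 1) (medges e3 1 2) (medges e3 1 3) (medges e3 1 4)
  (medges e3 2 2) (medges e3 2 3) (medges e3 2 4) (medges e3 3 3) (medges e3 3 4) (medges e3 4 4)
  := SO_decomp hc3 h43 hn2 R.
rewrite c12 c23 c33 c22 !z3 // in S3.
have [ch1 ch2] := chain R hn.
rewrite S1 S2 S3 ch1 ch2 /=.
case: (hG) => [[hs hi] hc hE h4].
have S : SOred R e = Ssum R (medges e 1 1) (medges e 1 2) (medges e 1 3) (medges e 1 4)
  (medges e 2 2) (medges e 2 3) (medges e 2 4) (medges e 3 3) (medges e 3 4) (medges e 4 4)
  := SO_decomp hc h4 hn2 R.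
rewrite S.
have [mb32 mb33 _] := mb_aux (mii_bound hs hi 3).
have [_ _ mb41] := mb_aux (mii_bound hs hi 4).
have hm11 := m11_0 hs hi hE hc.
have hed := eq_edges hE hc h4 hn2.
case: (@arith n (nverts e 1) (nverts e 2) (nverts e 3) (nverts e 4)
  (medges e 1 1) (medges e 1 2) (medges e 1 3) (medges e 1 4) (medges e 2 2)
  (medges e 2 3) (medges e 2 4) (medges e 3 3) (medges e 3 4) (medges e 4 4) hn
  (eq_v hc h4 hn2) hed (eq_h1 hs hi hc h4 hn2) (eq_h2 hs hi hc h4 hn2)
  (eq_h3 hs hi hc h4 hn2) (eq_h4 hs hi hc h4 hn2) hm11 (pendant hs hi hE hc h4) mb32 mb33 mb41).
  case=> [v4 [v3 [v2 [v1 [m23 [m33 [m22 [m12 [m13 [m14 [m24 [m34 m44]]]]]]]]]]]].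
  exfalso; apply: hnot; left; split => //; apply: omz => // i j;
  case: i => [|[|[|[|[|i]]]]] //; case: j => [|[|[|[|[|j]]]]] //; by move=> *.
case.
  case=> [v4 [v3 [v2 [v1 [m23 [m22 [m12 [m13 [m14 [m24 [m34 [m33 m44]]]]]]]]]]]].
  exfalso; apply: hnot; right; left; split => //; apply: omz => // i j;
  case: i => [|[|[|[|[|i]]]]] //; case: j => [|[|[|[|[|j]]]]] //; by move=> *.
case.
  case=> [v4 [v3 [v2 [v1 [m12 [m23 [m33 [m22 [m13 [m14 [m24 [m34 m44]]]]]]]]]]]].
  exfalso; apply: hnot; right; right; split => //; apply: omz => // i j;
  case: i => [|[|[|[|[|i]]]]] //; case: j => [|[|[|[|[|j]]]]] //; by move=> *.
move=> hineq.
have H := final R hn hm11 hed hineq.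
exact H.
Qed.

Local Close Scope ring_scope.
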